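(* Consider a merge junction with incoming links $I_1=[a_1,b_1]$, $I_2$ and outgoing link $I_3$, with flow capacities $C_1,C_3>0$, and suppose the fundamental diagram of $I_1$ satisfies (F). Fix a split $\eta_1\in(0,1)$, a cycle length $\Delta_A>0$ and the signal control $u_1$ with cycle $\Delta_A$ and split $\eta_1$. Fix data $N_{ini}$ on $[a_1,b_1]$ and $N_{up}$ on $[0,T]$. Assume no spillback, i.e. the supply of $I_3$ is constant, $S_3(t)\equiv C_3$. Let $N^{\Delta_A}$ and $N^0$ be the Lax–Hopf solutions on $I_1$ with data $(N_{ini},N_{up},N^{\Delta_A}_{down})$ and $(N_{ini},N_{up},N^{0}_{down})$ respectively. Then $N^{\Delta_A}(t,x)\to N^0(t,x)$ uniformly on $[0,T]\times[a_1,b_1]$ as $\Delta_A\to0$ (with $\eta_1$, $N_{ini}$, $N_{up}$ fixed).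
   Context: Assumption (F): $f:[0,\rho_j]\to[0,C]$ continuous and concave, $f(0)=f(\rho_j)=0$, $C=\max f$; $v=f'(0+)$, $-w=f'(\rho_j-)$ finite; $f^*(u)=\sup_{\rho\in[0,\rho_j]}\{f(\rho)-u\rho\}$, $u\in[-w,v]$. Lax–Hopf solution on $[a,b]$ with data $(N_{ini},N_{up},N_{down})$: with $\mathcal{C}(0,x)=N_{ini}(x)$, $\mathcal{C}(s,a)=N_{up}(s)$, $\mathcal{C}(s,b)=N_{down}(s)$ (minimum at corners), $\mathcal{C}=+\infty$ elsewhere, set $N(t,x)=\inf_{u\in[-w,v],\tau\ge0}\{\mathcal{C}(t-\tau,x-\tau u)+\tau f^*(u)\}$. Signal control: $u_1:[0,T]\to\{0,1\}$ is $\Delta_A$-periodic and, for some offset $\theta$, $u_1(t)=1$ iff $(t-\theta)\bmod\Delta_A\in[0,\eta_1\Delta_A)$ (green time $\eta_1\Delta_A$ per cycle). Effective supply for $I_1$: $\mathcal{S}_3^1(t)=\min\{C_1,S_3(t)\}$. Downstream data: on-and-off model $N^{\Delta_A}_{down}(t)=\int_0^t\mathcal{S}^1_3(\tau)u_1(\tau)\,d\tau$; continuum model $N^0_{down}(t)=\int_0^t\eta_1\mathcal{S}^1_3(\tau)\,d\tau$. *)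

(* Defs.v *)
From Stdlib Require Import Reals Lra.
Open Scope R_scope.

Definition is_inf (E : R -> Prop) (m : R) : Prop :=
  (forall y, E y -> m <= y) /\
  (forall m', (forall y, E y -> m' <= y) -> m' <= m).

Definition concave_on (f : R -> R) (lo hi : R) : Prop :=
  forall x y l, lo <= x <= hi -> lo <= y <= hi -> 0 <= l <= 1 ->
    l * f x + (1 - l) * f y <= f (l * x + (1 - l) * y).

(* Set of values C(t - tau, x - tau u) + tau f*(u), u in [-w,v], tau >= 0,
   over the points where the value condition C is finite (initial line t=0 on
   [a,b], upstream boundary x=a, downstream boundary x=b, times >= 0).
   Taking the infimum over the union gives the minimum at the corners. *)
Definition LH_set (w v a b : R) (fstar Nini Nup Ndown : R -> R) (t x : R)
  : R -> Prop :=
  fun y => exists u tau, -w <= u <= v /\ 0 <= tau /\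
    ( (t - tau = 0 /\ a <= x - tau * u <= b /\
         y = Nini (x - tau * u) + tau * fstar u)
   \/ (0 <= t - tau /\ x - tau * u = a /\ y = Nup (t - tau) + tau * fstar u)
   \/ (0 <= t - tau /\ x - tau * u = b /\ y = Ndown (t - tau) + tau * fstar u)).

(* Signal control with cycle D, split eta, offset theta:
   u1(t) = 1 iff (t - theta) mod D in [0, eta D), i.e.
   frac((t - theta)/D) < eta. *)
Definition signal (D eta theta t : R) : R :=
  if Rlt_dec (frac_part ((t - theta) / D)) eta then 1 else 0.

(* Main.v *)
Require Import Defs.
From Stdlib Require Import Reals Lra Lia ZArith.
From Coquelicot Require Import Coquelicot.
Open Scope R_scope.

Lemma Int_part_uniq (x : R) (m : Z) : IZR m <= x < IZR m + 1 -> Int_part x = m.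
Proof.
  intros [H1 H2]. destruct (base_Int_part x) as [B1 B2].
  assert (IZR (Int_part x) - IZR m < 1) by lra.
  assert (IZR (Int_part x) - IZR m > -1) by lra.
  rewrite <- minus_IZR in *.
  apply lt_IZR in H. apply Rgt_lt, lt_IZR in H0. lia.
Qed.

Lemma Int_part_le (x y : R) : x <= y -> (Int_part x <= Int_part y)%Z.
Proof.
  intros H. destruct (base_Int_part x) as [A1 A2]. destruct (base_Int_part y) as [B1 B2].
  assert (IZR (Int_part x) < IZR (Int_part y) + 1) by lra.
  rewrite <- plus_IZR in H0. apply lt_IZR in H0. lia.
Qed.

Lemma signal_in (D eta theta x : R) (m : Z) : 0 < D ->
  theta + D * IZR m < x < theta + D * IZR m + D ->
  signal D eta theta x = if Rlt_dec ((x - theta)/D - IZR m) eta then 1 else 0.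
Proof.
  intros HD Hx. unfold signal, frac_part.
  rewrite (Int_part_uniq _ m); auto.
  split.
  - apply (Rmult_le_reg_r D); auto. unfold Rdiv. rewrite Rmult_assoc, Rinv_l by lra. lra.
  - apply (Rmult_lt_reg_r D); auto. unfold Rdiv. rewrite Rmult_assoc, Rinv_l by lra. lra.
Qed.

Lemma period_piece (h : R -> R) (c D eta theta : R) (m : Z) (y : R) :
  0 < D -> 0 < eta < 1 -> (forall s, h s = c * signal D eta theta s) ->
  0 <= y <= D ->
  is_RInt h (theta + D * IZR m) (theta + D * IZR m + y) (c * Rmin y (eta * D)).
Proof.
  intros HD He Hh Hy.
  set (s := theta + D * IZR m).
  assert (Hdiv : forall x, (x - theta) / D - IZR m = (x - s) / D).
  { intros x. unfold s. field. lra. }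
  assert (Hlt : forall x, (x - s) / D < eta <-> x - s < eta * D).
  { intros x. split; intros H.
    - apply (Rmult_lt_compat_r D) in H; auto. unfold Rdiv in H. rewrite Rmult_assoc, Rinv_l in H by lra. lra.
    - apply (Rmult_lt_reg_r D); auto. unfold Rdiv. rewrite Rmult_assoc, Rinv_l by lra. lra. }
  destruct (Rle_dec y (eta * D)) as [Hle|Hgt].
  - rewrite Rmin_left by lra.
    apply (is_RInt_ext (fun _ => c)).
    + intros x Hx. rewrite Rmin_left in Hx by lra. rewrite Rmax_right in Hx by lra.
      rewrite Hh, (signal_in _ _ _ _ m) by (auto; fold s; lra).
      rewrite Hdiv. destruct (Rlt_dec ((x - s) / D) eta) as [_|n]; [lra|].
      exfalso; apply n, Hlt; lra.
    + replace (c * y) with (scal (s + y - s) c).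
      apply (@is_RInt_const R_NormedModule). unfold scal; simpl; unfold mult; simpl. ring.
  - rewrite Rmin_right by lra.
    replace (c * (eta * D)) with (plus (c * (eta * D)) 0) by (unfold plus; simpl; ring).
    apply (@is_RInt_Chasles R_NormedModule) with (s + eta * D).
    + apply (is_RInt_ext (fun _ => c)).
      * intros x Hx. rewrite Rmin_left in Hx by nra. rewrite Rmax_right in Hx by nra.
        rewrite Hh, (signal_in _ _ _ _ m) by (auto; fold s; nra).
        rewrite Hdiv. destruct (Rlt_dec _ _) as [_|n]; [lra|].
        exfalso; apply n, Hlt; lra.
      * replace (c * (eta * D)) with (scal (s + eta * D - s) c).
        apply (@is_RInt_const R_NormedModule). unfold scal; simpl; unfold mult; simpl. ring.
    + apply (is_RInt_ext (fun _ => 0)).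
      * intros x Hx. rewrite Rmin_left in Hx by lra. rewrite Rmax_right in Hx by lra.
        rewrite Hh, (signal_in _ _ _ _ m) by (auto; fold s; nra).
        rewrite Hdiv. destruct (Rlt_dec _ _) as [h1|n]; [|lra].
        apply Hlt in h1. lra.
      * generalize (@is_RInt_const R_NormedModule (s + eta * D) (s + y) 0).
        replace (scal (s + y - (s + eta * D)) (0:R_NormedModule)) with 0; auto.
        unfold scal; simpl; unfold mult; simpl. ring.
Qed.

Lemma periods (h : R -> R) (c D eta theta : R) (m : Z) (n : nat) :
  0 < D -> 0 < eta < 1 -> (forall s, h s = c * signal D eta theta s) ->
  is_RInt h (theta + D * IZR m) (theta + D * IZR (m + Z.of_nat n)) (INR n * (c * (eta * D))).
Proof.
  intros HD He Hh. induction n as [|n IH].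
  - simpl. rewrite Z.add_0_r. replace (0 * (c * (eta * D))) with (@zero R_NormedModule).
    apply is_RInt_point. unfold zero; simpl. ring.
  - replace (INR (S n) * (c * (eta * D))) with
      (@plus R_NormedModule (INR n * (c * (eta * D))) (c * Rmin D (eta * D))).
    2:{ rewrite Rmin_right by nra. rewrite S_INR. unfold plus; simpl. ring. }
    apply (@is_RInt_Chasles R_NormedModule) with (theta + D * IZR (m + Z.of_nat n)); auto.
    replace (theta + D * IZR (m + Z.of_nat (S n))) with
      (theta + D * IZR (m + Z.of_nat n) + D).
    + apply period_piece; auto; lra.
    + rewrite Nat2Z.inj_succ, Z.add_succ_r, succ_IZR. ring.
Qed.

Lemma Rmin_fact (b e D : R) : 0 <= b < D -> 0 < e < 1 ->
  0 <= Rmin b (e * D) - e * b <= D.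
Proof.
  intros Hb He. unfold Rmin. destruct (Rle_dec b (e * D)); nra.
Qed.

Lemma int_bound (h : R -> R) (c D eta theta t I : R) :
  0 < D -> 0 < eta < 1 -> 0 <= c -> (forall s, h s = c * signal D eta theta s) ->
  0 <= t -> is_RInt h 0 t I -> Rabs (I - eta * c * t) <= c * D.
Proof.
  intros HD He Hc Hh Ht HI.
  set (m0 := Int_part ((0 - theta) / D)).
  set (m1 := Int_part ((t - theta) / D)).
  assert (Hm : (m0 <= m1)%Z).
  { apply Int_part_le. unfold Rdiv. apply Rmult_le_compat_r.
    apply Rlt_le, Rinv_0_lt_compat; auto. lra. }
  assert (Hb : forall x, let k := Int_part ((x - theta) / D) in
             0 <= x - (theta + D * IZR k) < D).
  { intros x k. destruct (base_Int_part ((x - theta) / D)) as [B1 B2]. fold k in B1, B2.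
    assert (E : (x - theta) / D * D = x - theta) by (field; lra).
    split; nra. }
  pose proof (Hb 0) as Ha. pose proof (Hb t) as Hbt. simpl in Ha, Hbt. fold m0 in Ha. fold m1 in Hbt.
  set (al := 0 - (theta + D * IZR m0)) in *.
  set (be := t - (theta + D * IZR m1)) in *.
  pose proof (period_piece h c D eta theta m0 al HD He Hh ltac:(lra)) as P0.
  pose proof (period_piece h c D eta theta m1 be HD He Hh ltac:(lra)) as P1.
  replace (theta + D * IZR m0 + al) with 0 in P0 by (unfold al; ring).
  replace (theta + D * IZR m1 + be) with t in P1 by (unfold be; ring).
  set (n := Z.to_nat (m1 - m0)).
  pose proof (periods h c D eta theta m0 n HD He Hh) as PM.
  assert (En : (m0 + Z.of_nat n)%Z = m1) by (unfold n; rewrite Z2Nat.id; lia).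
  rewrite En in PM.
  assert (EnR : INR n = IZR m1 - IZR m0).
  { rewrite INR_IZR_INZ. unfold n. rewrite Z2Nat.id by lia. apply minus_IZR. }
  apply is_RInt_swap in P0.
  pose proof (@is_RInt_Chasles R_NormedModule _ _ _ _ _ _ P0 PM) as Q.
  pose proof (@is_RInt_Chasles R_NormedModule _ _ _ _ _ _ Q P1) as Q2.
  apply (@is_RInt_unique R_CompleteNormedModule) in Q2. apply (@is_RInt_unique R_CompleteNormedModule) in HI. rewrite HI in Q2.
  rewrite Q2. unfold plus, opp; simpl.
  pose proof (Rmin_fact al eta D ltac:(lra) He) as F0.
  pose proof (Rmin_fact be eta D ltac:(lra) He) as F1.
  assert (Et : t = D * INR n + be - al) by (rewrite EnR; unfold al, be; ring).
  rewrite Et.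
  apply Rabs_le.
  replace (- (c * Rmin al (eta * D)) + INR n * (c * (eta * D)) + c * Rmin be (eta * D) -
           eta * c * (D * INR n + be - al))
    with (c * ((Rmin be (eta * D) - eta * be) - (Rmin al (eta * D) - eta * al))) by ring.
  split; nra.
Qed.

Lemma inf_close (E1 E2 : R -> Prop) m1 m2 d :
  is_inf E1 m1 -> is_inf E2 m2 ->
  (forall y, E1 y -> exists y', E2 y' /\ y' <= y + d) ->
  (forall y, E2 y -> exists y', E1 y' /\ y' <= y + d) -> Rabs (m1 - m2) <= d.
Proof.
  intros [L1 G1] [L2 G2] H12 H21.
  assert (m2 - d <= m1).
  { apply G1. intros y Hy. destruct (H12 y Hy) as [y' [Hy' Hle]]. specialize (L2 y' Hy'). lra. }
  assert (m1 - d <= m2).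
  { apply G2. intros y Hy. destruct (H21 y Hy) as [y' [Hy' Hle]]. specialize (L1 y' Hy'). lra. }
  apply Rabs_le. lra.
Qed.

Lemma LH_close w v a b fstar Nini Nup Nd1 Nd2 t x d :
  0 <= d -> (forall s, 0 <= s <= t -> Rabs (Nd1 s - Nd2 s) <= d) ->
  forall y, LH_set w v a b fstar Nini Nup Nd1 t x y ->
  exists y', LH_set w v a b fstar Nini Nup Nd2 t x y' /\ y' <= y + d.
Proof.
  intros Hd HN y [u [tau [Hu [Htau H]]]].
  destruct H as [[H1 [H2 H3]]|[[H1 [H2 H3]]|[H1 [H2 H3]]]].
  - exists y. split; [|lra]. exists u, tau. split; [exact Hu|]. split; [exact Htau|]. left. exact (conj H1 (conj H2 H3)).
  - exists y. split; [|lra]. exists u, tau. split; [exact Hu|]. split; [exact Htau|]. right. left. exact (conj H1 (conj H2 H3)).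
  - exists (Nd2 (t - tau) + tau * fstar u). split.
    + exists u, tau. split; [exact Hu|]. split; [exact Htau|]. right. right. exact (conj H1 (conj H2 eq_refl)).
    + assert (Hs : 0 <= t - tau <= t) by lra. specialize (HN (t - tau) Hs). revert HN; unfold Rabs; destruct (Rcase_abs _); lra.
Qed.
Theorem theorem4p1
  (rhoj Cmax v w : R) (f fstar : R -> R)
  (a1 b1 T C1 C3 eta1 theta : R) (Nini Nup S3 : R -> R)
  (NdownD : R -> R -> R) (Ndown0 : R -> R)
  (ND : R -> R -> R -> R) (N0 : R -> R -> R) :
  (* Assumption (F) on the fundamental diagram f of I_1 *)
  0 < rhoj ->
  (forall r, 0 <= r <= rhoj -> limit1_in f (fun z => 0 <= z <= rhoj) (f r) r) ->
  concave_on f 0 rhoj ->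
  f 0 = 0 -> f rhoj = 0 ->
  (forall r, 0 <= r <= rhoj -> 0 <= f r <= Cmax) ->
  (exists r, 0 <= r <= rhoj /\ f r = Cmax) ->
  (forall eps, 0 < eps -> exists dl, 0 < dl /\
     forall h, 0 < h < dl -> h <= rhoj -> Rabs ((f h - f 0) / h - v) < eps) ->
  (forall eps, 0 < eps -> exists dl, 0 < dl /\
     forall h, 0 < h < dl -> h <= rhoj ->
       Rabs ((f (rhoj - h) - f rhoj) / (- h) - (- w)) < eps) ->
  (forall u, - w <= u <= v ->
     is_lub (fun y => exists r, 0 <= r <= rhoj /\ y = f r - u * r) (fstar u)) ->
  (* junction / signal parameters *)
  a1 < b1 -> 0 < T -> 0 < C1 -> 0 < C3 -> 0 < eta1 < 1 ->
  (* no spillback *)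
  (forall t, S3 t = C3) ->
  (* on-and-off downstream data, for every cycle length D > 0 *)
  (forall D t, 0 < D -> 0 <= t <= T ->
     exists pr : Riemann_integrable
                   (fun s => Rmin C1 (S3 s) * signal D eta1 theta s) 0 t,
       NdownD D t = RiemannInt pr) ->
  (* continuum downstream data *)
  (forall t, 0 <= t <= T ->
     exists pr : Riemann_integrable (fun s => eta1 * Rmin C1 (S3 s)) 0 t,
       Ndown0 t = RiemannInt pr) ->
  (* Lax-Hopf solutions *)
  (forall D t x, 0 < D -> 0 <= t <= T -> a1 <= x <= b1 ->
     is_inf (LH_set w v a1 b1 fstar Nini Nup (NdownD D) t x) (ND D t x)) ->
  (forall t x, 0 <= t <= T -> a1 <= x <= b1 ->
     is_inf (LH_set w v a1 b1 fstar Nini Nup Ndown0 t x) (N0 t x)) ->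
  (* uniform convergence as D -> 0 *)
  forall eps, 0 < eps -> exists dl, 0 < dl /\
    forall D, 0 < D < dl -> forall t x, 0 <= t <= T -> a1 <= x <= b1 ->
      Rabs (ND D t x - N0 t x) < eps.
Proof.
  intros Hrho _ _ _ _ _ _ _ _ _ Hab HT HC1 HC3 Heta HS3 HND HN0 HLD HL0 eps Heps.
  set (c := Rmin C1 C3).
  assert (Hc : 0 < c) by (unfold c, Rmin; destruct (Rle_dec C1 C3); lra).
  assert (Hclose : forall D s, 0 < D -> 0 <= s <= T ->
            Rabs (NdownD D s - Ndown0 s) <= c * D).
  { intros D s HD Hs.
    destruct (HND D s HD Hs) as [pr E1]. destruct (HN0 s Hs) as [pr0 E0].
    rewrite E1, E0, <- !RInt_Reals.
    assert (R0 : RInt (fun s0 => eta1 * Rmin C1 (S3 s0)) 0 s = eta1 * c * s).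
    { rewrite (RInt_ext _ (fun _ => eta1 * c)).
      - rewrite RInt_const. unfold scal; simpl; unfold mult; simpl. ring.
      - intros x _. rewrite HS3. reflexivity. }
    rewrite R0.
    apply (int_bound (fun s0 => Rmin C1 (S3 s0) * signal D eta1 theta s0) c D eta1 theta s); auto; try lra.
    - intros x. rewrite HS3. reflexivity.
    - apply (@RInt_correct R_CompleteNormedModule). apply ex_RInt_Reals_1. exact pr. }
  exists (eps / c). split.
  - apply Rdiv_lt_0_compat; auto.
  - intros D [HD HDl] t x Ht Hx.
    assert (HcD : c * D < eps).
    { apply (Rmult_lt_compat_l c) in HDl; auto. unfold Rdiv in HDl.
      rewrite <- Rmult_assoc, (Rmult_comm c eps), Rmult_assoc, Rinv_r in HDl by lra. lra. }
    apply Rle_lt_trans with (c * D); auto.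
    apply (inf_close _ _ _ _ _ (HLD D t x HD Ht Hx) (HL0 t x Ht Hx)).
    + apply LH_close. nra. intros s Hs. apply Hclose; auto; lra.
    + apply LH_close. nra. intros s Hs. rewrite Rabs_minus_sym. apply Hclose; auto; lra.
Qed.
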